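(* Let $G=(V,E)$ be a finite undirected graph with $V=\{1,\dots,n\}$. Then $A_H$ is positive definite for every $A\in\mathbb{P}_G$ and every subgraph $H=(V,E')$ of $G$ ($E'\subseteq E$) if and only if $G$ is a union of (vertex-disjoint) trees, i.e. $G$ contains no cycle.
   Context: For a symmetric $n\times n$ real matrix $A=(a_{ij})$ and an undirected graph $K=(V,F)$ on $V=\{1,\dots,n\}$, the thresholded matrix $A_K$ is defined by $(A_K)_{ij}=a_{ij}$ if $i=j$ or $(i,j)\in F$, and $(A_K)_{ij}=0$ otherwise. $\mathbb{P}_G$ denotes the set of symmetric positive definite $n\times n$ real matrices $A$ with $a_{ij}=0$ whenever $i\neq j$ and $(i,j)\notin E$. *)

(* Defs.v *)
From mathcomp Require Import all_boot all_order all_algebra.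
From mathcomp Require Import reals.
Set Implicit Arguments. Unset Strict Implicit. Unset Printing Implicit Defensive.
Import Order.TTheory GRing.Theory Num.Theory.
Local Open Scope ring_scope.

Definition simple_graph (n : nat) (E : rel 'I_n) : Prop :=
  symmetric E /\ irreflexive E.

Definition posdef (R : realType) (n : nat) (A : 'M[R]_n) : Prop :=
  A^T = A /\ forall x : 'cV[R]_n, x != 0 -> 0 < (x^T *m A *m x) 0 0.

Definition threshold (R : realType) (n : nat) (A : 'M[R]_n) (F : rel 'I_n)
  : 'M[R]_n :=
  \matrix_(i, j) (if (i == j) || F i j then A i j else 0).

Definition PG (R : realType) (n : nat) (E : rel 'I_n) (A : 'M[R]_n) : Prop :=
  posdef A /\ forall i j, i != j -> ~~ E i j -> A i j = 0.

Definition has_cycle (n : nat) (E : rel 'I_n) : Prop :=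
  exists s : seq 'I_n, [/\ (3 <= size s)%N, uniq s & cycle E s].

(* Main.v *)
Require Import Defs.
From mathcomp Require Import all_boot all_order all_algebra.
From mathcomp Require Import reals ring lra.
Set Implicit Arguments. Unset Strict Implicit. Unset Printing Implicit Defensive.
Import Order.TTheory GRing.Theory Num.Theory.
Local Open Scope ring_scope.


Section Gen.
Variables (R : realType) (n : nat).

Lemma formE (N : 'M[R]_n) (x : 'cV[R]_n) :
  (x^T *m N *m x) 0 0 = \sum_i \sum_j x i 0 * N i j * x j 0.
Proof.
rewrite mxE exchange_big /=; apply: eq_bigr => j _.
rewrite mxE mulr_suml; apply: eq_bigr => i _; by rewrite !mxE.
Qed.

Lemma sum_pred1 (a : 'I_n) (F : 'I_n -> R) :
  \sum_i (i == a)%:R * F i = F a.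
Proof.
rewrite (bigD1 a) //= eqxx mul1r big1 ?addr0 // => i /negbTE ->.
by rewrite mul0r.
Qed.

Lemma exists_nz (x : 'cV[R]_n) : x != 0 -> exists i, x i 0 != 0.
Proof.
move=> xn0; apply/existsP; apply: contraR xn0 => /existsPn H.
apply/eqP/matrixP => i j; rewrite ord1 mxE; exact/eqP/negbNE/H.
Qed.

End Gen.

Lemma cycle_of_path (n : nat) (E E' : rel 'I_n) (i j : 'I_n) :
  symmetric E -> subrel E' E -> i != j -> ~~ E' i j -> connect E' i j ->
  E i j -> has_cycle E.
Proof.
move=> symE sub ij nE' /connectP [p pp ej] Eij; subst j.
case/shortenP: pp ij nE' Eij => p' pp' up' _ ij nE' Eij.
exists (i :: p'); split => //.
- case: p' pp' up' ij nE' Eij => [|y [|z q]] //=.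
  + by rewrite eqxx.
  + by rewrite andbT => ->.
- rewrite /= rcons_path (sub_path sub pp') /= symE; done.
Qed.


Lemma form_ge0 (R : realType) (n : nat) (A : 'M[R]_n) (y : 'cV[R]_n) :
  posdef A -> 0 <= (y^T *m A *m y) 0 0.
Proof.
move=> [_ pd]; have [->|yn0] := eqVneq y 0.
  by rewrite mulmx0 mxE.
exact/ltW/pd.
Qed.

Lemma forest_pd (R : realType) (n : nat) (E : rel 'I_n) (A : 'M[R]_n)
  (E' : rel 'I_n) :
  simple_graph E -> ~ has_cycle E -> PG E A -> simple_graph E' ->
  subrel E' E -> posdef (threshold A E').
Proof.
move=> [symE irrE] nocyc [[At pdA] supp] [symE' irrE'] sub.
set C := connect E'.
have Csym : connect_sym E' := sym_connect_sym symE'.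
have Aij : forall i j, A j i = A i j.
  by move=> i j; rewrite -[in LHS]At mxE.
have thrE : forall i j, threshold A E' i j = (C i j)%:R * A i j.
  move=> i j; rewrite mxE.
  have [->|ij] /= := eqVneq i j; first by rewrite /C connect0 mul1r.
  case E'ij: (E' i j); first by rewrite /C connect1 // mul1r.
  case Cij: (C i j); last by rewrite mul0r.
  case Eij: (E i j).
    by exfalso; apply: nocyc; apply: (@cycle_of_path _ E E' i j) => //; rewrite E'ij.
  by rewrite supp ?Eij // mulr0.
set w := fun r => (#|[pred t | C r t]|%:R : R)^-1.
have wid : forall i j, ((C i j)%:R : R) = \sum_r w r * ((C r i)%:R * (C r j)%:R).
  move=> i j; case Cij: (C i j).
    have e1 : forall r, C r j = C r i.
      move=> r; apply/idP/idP => H.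
        by apply: (connect_trans H); rewrite Csym.
      exact: connect_trans H Cij.
    under eq_bigr => r _ do rewrite e1 -natrM mulnb andbb mulr_natr mulrb.
    rewrite -big_mkcond /=.
    have e2 : forall r, C r i -> w r = w i.
      move=> r Cri; rewrite /w; congr (_%:R^-1); apply: eq_card => t /=.
      apply/idP/idP => H; first by apply: connect_trans H; rewrite Csym.
      exact: connect_trans Cri H.
    rewrite (eq_bigr (fun _ => w i)) ?sumr_const; last by move=> r /e2.
    rewrite (@eq_card _ _ [pred t | C i t]); last first.
      move=> t; rewrite !inE /C Csym //.
    rewrite /w -[RHS]mulr_natr mulVf // pnatr_eq0 -lt0n.
    by apply/card_gt0P; exists i; rewrite inE /C connect0.
  rewrite big1 // => r _.
  case Cri: (C r i); case Crj: (C r j) => /=; rewrite ?(mulr0, mul0r, mulr1) //.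
  exfalso; move: Cij; rewrite -[C i j]/(connect E' i j).
  by rewrite (connect_trans (y:=r)) // Csym.
split.
  apply/matrixP => i j; rewrite !mxE symE' (eq_sym j i) Aij; done.
move=> x xn0.
set y := fun r => \col_i ((C r i)%:R * x i 0).
have eq : (x^T *m threshold A E' *m x) 0 0 =
    \sum_r w r * ((y r)^T *m A *m y r) 0 0.
  rewrite formE.
  under eq_bigr => i _ do under eq_bigr => j _ do
    rewrite thrE wid mulr_suml mulr_sumr mulr_suml.
  under eq_bigr => i _ do rewrite exchange_big /=.
  rewrite exchange_big /=; apply: eq_bigr => r _.
  rewrite formE mulr_sumr; apply: eq_bigr => i _.
  rewrite mulr_sumr; apply: eq_bigr => j _; rewrite !mxE; ring.
rewrite eq.
have [i0 xi0] := exists_nz xn0.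
rewrite (bigD1 i0) //=.
set a := w i0 * _; set b := \sum_(i | _) _.
have h1 : 0 < a.
  apply: mulr_gt0.
    rewrite /w invr_gt0 ltr0n; apply/card_gt0P; exists i0; rewrite inE /C connect0 //.
  apply: pdA; apply: contra xi0 => /eqP/matrixP/(_ i0 0); rewrite !mxE => <-.
  by rewrite /C connect0 mul1r.
have h2 : 0 <= b.
  apply: sumr_ge0 => r _; apply: mulr_ge0; first by rewrite /w invr_ge0 ler0n.
  exact: form_ge0.
lra.
Qed.


Section Gen3.
Variables (R : realType) (n : nat).

Definition Amat (eps mu : R) (L : nat) (d : nat -> 'I_n -> R) (g : 'I_n -> R)
  : 'M[R]_n :=
  \matrix_(i, j) (eps * (i == j)%:R + \sum_(0 <= m < L) (d m i * d m j)
                  - mu * (g i * g j)).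

Lemma sq_sum (f : 'I_n -> R) (x : 'cV[R]_n) :
  (\sum_i f i * x i 0) ^+ 2 = \sum_i \sum_j x i 0 * (f i * f j) * x j 0.
Proof.
rewrite expr2 mulr_suml; apply: eq_bigr => i _.
rewrite mulr_sumr; apply: eq_bigr => j _; ring.
Qed.

Lemma formA eps mu L d g (x : 'cV[R]_n) :
  (x^T *m Amat eps mu L d g *m x) 0 0 =
  eps * \sum_i x i 0 ^+ 2 + \sum_(0 <= m < L) (\sum_i d m i * x i 0) ^+ 2
  - mu * (\sum_i g i * x i 0) ^+ 2.
Proof.
rewrite formE.
under eq_bigr => i _ do under eq_bigr => j _ do
  rewrite mxE mulrBr mulrDr mulrBl mulrDl.
under eq_bigr => i _ do rewrite sumrB big_split /=.
rewrite sumrB big_split /=.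
congr (_ + _ - _).
- rewrite mulr_sumr; apply: eq_bigr => i _.
  have e : forall j, x i 0 * (eps * (i == j)%:R) * x j 0 =
      (j == i)%:R * (eps * x i 0 * x j 0) by move=> j; rewrite eq_sym; ring.
  under eq_bigr => j _ do rewrite e.
  by rewrite sum_pred1 expr2; ring.
- under eq_bigr => i _ do under eq_bigr => j _ do
    rewrite mulr_sumr mulr_suml.
  under eq_bigr => i _ do rewrite exchange_big /=.
  rewrite exchange_big /=; apply: eq_bigr => m _.
  by rewrite sq_sum.
- by rewrite sq_sum mulr_sumr; apply: eq_bigr => i _; rewrite mulr_sumr;
    apply: eq_bigr => j _; ring.
Qed.

End Gen3.

Lemma alg (R : realType) (l Q S : R) : 0 < l ->
  0 <= l ^+ 2 * Q + (- 2 * l * S) * S + S ^+ 2 * l -> S ^+ 2 <= l * Q.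
Proof.
move=> l0 h.
have : 0 <= l * (l * Q - S ^+ 2).
  have -> : l * (l * Q - S ^+ 2) = l ^+ 2 * Q + (- 2 * l * S) * S + S ^+ 2 * l by ring.
  exact: h.
by rewrite pmulr_rge0 // subr_ge0.
Qed.

Lemma CS (R : realType) (L : nat) (a : nat -> R) : (0 < L)%N ->
  (\sum_(0 <= m < L) a m) ^+ 2 <= L%:R * \sum_(0 <= m < L) a m ^+ 2.
Proof.
move=> L0.
have h : 0 <= \sum_(0 <= m < L) (L%:R * a m - \sum_(0 <= m < L) a m) ^+ 2.
  by apply: sumr_ge0 => m _; apply: sqr_ge0.
apply: alg; first by rewrite ltr0n.
move: h; set S := \sum_(0 <= m < L) a m.
have e0 : forall m, (L%:R * a m - S) ^+ 2 = L%:R ^+ 2 * a m ^+ 2 +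
       (- 2 * L%:R * S) * a m + S ^+ 2.
  move=> m; clearbody S; ring.
rewrite (eq_bigr _ (fun m _ => e0 m)).
rewrite !big_split /= -!mulr_sumr sumr_const_nat subn0 mulr_natr -/S.
have -> : S ^+ 2 * L%:R = S * (S *+ L) by rewrite mulr_natr expr2 mulrnAr.
by [].
Qed.


Lemma edge_prod (R : realType) (n : nat) (E : rel 'I_n) (a b i j : 'I_n) :
  E a b -> E b a -> i != j -> ~~ E i j ->
  (((i == a)%:R - (i == b)%:R) * ((j == a)%:R - (j == b)%:R) : R) = 0.
Proof.
move=> Eab Eba ij nE.
have [ia|ia] := eqVneq i a.
  subst i; have ja : (j == a) = false by rewrite eq_sym; apply/negbTE.
  have jb : (j == b) = false by apply: contraNF nE => /eqP ->.
  by rewrite ja jb subrr mulr0.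
have [ib|ib] := eqVneq i b.
  subst i; have jb : (j == b) = false by rewrite eq_sym; apply/negbTE.
  have ja : (j == a) = false by apply: contraNF nE => /eqP ->.
  by rewrite ja jb subrr mulr0.
by rewrite subrr mul0r.
Qed.

Lemma cycle_counter (R : realType) (n : nat) (E : rel 'I_n) (s : seq 'I_n) :
  simple_graph E -> (3 <= size s)%N -> uniq s -> cycle E s ->
  exists (A : 'M[R]_n) (E' : rel 'I_n),
    [/\ PG E A, simple_graph E', subrel E' E & ~ posdef (threshold A E')].
Proof.
move=> [symE irrE] s3 us cs.
case: s s3 us cs => [|c0 s'] // s3 us cs.
set s := c0 :: s' in s3 us cs *.
set K := size s.
pose c m := nth c0 s m.
pose l := K.-1.
have Kl : K = l.+1 by rewrite /l /K.
have l2 : (2 <= l)%N by move: s3; rewrite -/K Kl.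
have hE : forall m, (m < K)%N ->
    E (c m) (nth c0 (rcons s' c0) m).
  move: cs => /= /(pathP c0) H m mK.
  have := H m; rewrite size_rcons -/K => /(_ mK).
  by rewrite -rcons_cons nth_rcons -/K mK.
have hE1 : forall m, (m.+1 < K)%N -> E (c m) (c m.+1).
  move=> m mK; have := hE m (ltnW mK).
  by rewrite nth_rcons (_ : size s' = l) //; move: mK; rewrite Kl ltnS => ->.
have hE2 : E (c l) (c 0).
  have := hE l; rewrite Kl ltnSn => /(_ isT).
  by rewrite nth_rcons (_ : size s' = l) // ltnn eqxx.
have cinj : forall p q, (p < K)%N -> (q < K)%N -> (c p == c q) = (p == q).
  by move=> p q pK qK; apply: nth_uniq.
have l0 : (0 < l)%N by apply: leq_trans l2.
have n0 : (0 < n)%N by apply: leq_ltn_trans (ltn_ord c0).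
pose mu : R := (l%:R)^-1.
pose eps : R := mu / n%:R.
have mu0 : 0 < mu by rewrite invr_gt0 ltr0n; apply: leq_trans l2.
have eps0 : 0 < eps by rewrite divr_gt0 // ltr0n.
pose d := fun m (i : 'I_n) => ((i == c m)%:R - (i == c m.+1)%:R : R).
pose g := fun (i : 'I_n) => ((i == c 0)%:R - (i == c l)%:R : R).
pose A := Amat eps mu l d g.
pose P := fun i j : 'I_n => ((i == c 0) && (j == c l)) || ((i == c l) && (j == c 0)).
pose E' := fun i j => E i j && ~~ P i j.
have supp : forall i j, i != j -> ~~ E i j -> A i j = 0.
  move=> i j ij nE; rewrite /A /Amat mxE (negbTE ij) mulr0 add0r.
  rewrite big_nat big1; last first.
    move=> m /andP [_ ml]; rewrite /d /=; apply: (@edge_prod R n E (c m) (c m.+1) i j) => //.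
      by apply: hE1; rewrite Kl ltnS.
    by rewrite symE; apply: hE1; rewrite Kl ltnS.
  by rewrite /g /= (@edge_prod R n E (c 0) (c l) i j) ?mulr0 ?subr0 // symE.
have Asym : A^T = A.
  apply/matrixP => i j; rewrite !mxE eq_sym; congr (_ + _ - _ * _).
    by apply: eq_bigr => m _; rewrite mulrC.
  by rewrite mulrC.
have formA' : forall x : 'cV[R]_n, (x^T *m A *m x) 0 0 =
   eps * \sum_i x i 0 ^+ 2 + \sum_(0 <= m < l) (x (c m) 0 - x (c m.+1) 0) ^+ 2
   - mu * (x (c 0) 0 - x (c l) 0) ^+ 2.
  move=> x; rewrite formA; congr (_ + _ - _ * (_ ^+ 2)).
    apply: eq_bigr => m _; congr (_ ^+ 2).
    by rewrite /d; under eq_bigr do rewrite mulrBl; rewrite sumrB !sum_pred1.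
  by rewrite /g; under eq_bigr do rewrite mulrBl; rewrite sumrB !sum_pred1.
have posA : posdef A.
  split => // x xn0; rewrite formA'.
  have tel : \sum_(0 <= m < l) (x (c m) 0 - x (c m.+1) 0) = x (c 0) 0 - x (c l) 0.
    rewrite (telescope_sumr_eq (fun k => - x (c k) 0)) //; first by rewrite opprK addrC.
    by move=> k _; rewrite opprK addrC.
  have cs1 := CS (fun m => x (c m) 0 - x (c m.+1) 0) l0.
  rewrite /= tel in cs1.
  have cs2 : mu * (x (c 0) 0 - x (c l) 0) ^+ 2 <=
      \sum_(0 <= m < l) (x (c m) 0 - x (c m.+1) 0) ^+ 2.
    have ml : mu * l%:R = 1 by rewrite /mu mulVf // pnatr_eq0 -lt0n l0.
    by have := ler_wpM2l (ltW mu0) cs1; rewrite (mulrA mu l%:R) ml mul1r.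
  have [i0 xi0] := exists_nz xn0.
  have hx : 0 < \sum_i x i 0 ^+ 2.
    rewrite (bigD1 i0) //=.
    have h1 : 0 < x i0 0 ^+ 2 by rewrite exprn_even_gt0 //= xi0.
    have h2 : 0 <= \sum_(i | i != i0) x i 0 ^+ 2.
      by apply: sumr_ge0 => i _; apply: sqr_ge0.
    lra.
  have := mulr_gt0 eps0 hx; lra.
have PGA : PG E A by split.
have simE' : simple_graph E'.
  split.
    move=> i j; rewrite /E' /P symE; congr (_ && ~~ _).
    by case: (i == c 0); case: (j == c 0); case: (i == c l); case: (j == c l).
  by move=> i; rewrite /E' irrE.
have subE' : subrel E' E by move=> i j /andP [].
exists A, E'; split => //.
move=> [_ pdT].
pose z : 'cV[R]_n := \col_i ((i \in s)%:R).
have zc : forall m, (m < K)%N -> z (c m) 0 = 1.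
  by move=> m mK; rewrite mxE mem_nth.
have c0l : c 0 != c l.
  by rewrite cinj ?Kl // eq_sym -lt0n l0.
have Pval : forall i j, ((P i j)%:R : R) =
    (i == c 0)%:R * (j == c l)%:R + (i == c l)%:R * (j == c 0)%:R.
  move=> i j; rewrite /P /= -!natrM -natrD.
  have [ie|i0] := eqVneq i (c 0).
    subst i; rewrite (negbTE c0l).
    by case: (j == c l); case: (j == c 0).
  have [ie|il] := eqVneq i (c l).
    subst i.
    by case: (j == c l); case: (j == c 0).
  by [].
have ml1 : forall m, (m < l)%N -> (c m == c l) = false.
  by move=> m ml; rewrite cinj ?Kl ?ltnSn ?(ltn_trans ml) // ltn_eqF.
have Acl : A (c 0) (c l) = mu.
  rewrite /A /Amat mxE (negbTE c0l) mulr0 add0r big_nat big1; last first.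
    move=> m /andP [_ ml]; rewrite /d /=.
    have mK : (m < K)%N by rewrite Kl ltnS ltnW.
    have m1K : (m.+1 < K)%N by rewrite Kl ltnS.
    have lK : (l < K)%N by rewrite Kl.
    have oK : (0 < K)%N by rewrite Kl.
    rewrite (cinj 0%N m) // (cinj 0%N m.+1) // (cinj l m) // (cinj l m.+1) //.
    rewrite (gtn_eqF ml) /=.
    case: m ml {mK m1K} => [|m] ml /=.
      by rewrite (gtn_eqF l2) subrr mulr0.
    by rewrite subrr mul0r.
  rewrite /g /= eqxx (negbTE c0l) eq_sym (negbTE c0l) eqxx.
  rewrite add0r /= mulr1n mulr0n; ring.
have Alc : A (c l) (c 0) = mu by rewrite -Acl -{1}Asym mxE.
have thr : forall i j, threshold A E' i j = A i j - mu * (P i j)%:R.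
  move=> i j; rewrite mxE /E'.
  case Pij: (P i j) => /=.
    rewrite andbF orbF mulr1n.
    move: Pij; rewrite /P => /orP [/andP [/eqP e1 /eqP e2] | /andP [/eqP e1 /eqP e2]];
      subst i j.
      by rewrite (negbTE c0l) Acl mulr1 subrr.
    case: ifP => [/eqP e|_]; first by move: c0l; rewrite e eqxx.
    by rewrite Alc mulr1 subrr.
  rewrite mulr0 subr0; case: ifP => // /negbT; rewrite negb_or andbT => /andP [ij nE].
  by rewrite supp.
have e1 : forall i j, z i 0 * threshold A E' i j * z j 0 =
    z i 0 * A i j * z j 0 - mu * ((i == c 0)%:R * (z i 0 * ((j == c l)%:R * z j 0)))
    - mu * ((i == c l)%:R * (z i 0 * ((j == c 0)%:R * z j 0))).
  by move=> i j; rewrite thr Pval; ring.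
have e2 : forall i, \sum_j z i 0 * threshold A E' i j * z j 0 =
    \sum_j z i 0 * A i j * z j 0 - mu * ((i == c 0)%:R * (z i 0 * z (c l) 0))
    - mu * ((i == c l)%:R * (z i 0 * z (c 0) 0)).
  move=> i; rewrite (eq_bigr _ (fun j _ => e1 i j)) !sumrB -!mulr_sumr !sum_pred1.
  done.
have formT : (z^T *m threshold A E' *m z) 0 0 = (z^T *m A *m z) 0 0
    - mu * (z (c 0) 0 * z (c l) 0) - mu * (z (c l) 0 * z (c 0) 0).
  rewrite !formE (eq_bigr _ (fun i _ => e2 i)) !sumrB -!mulr_sumr !sum_pred1.
  done.
have z0 : z (c 0) 0 = 1 by rewrite zc // Kl.
have zl : z (c l) 0 = 1 by rewrite zc // Kl.
have formAz : (z^T *m A *m z) 0 0 <= mu.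
  rewrite formA' z0 zl subrr expr0n /= mulr0 subr0.
  have hm : \sum_(0 <= m < l) (z (c m) 0 - z (c m.+1) 0) ^+ 2 = 0.
    rewrite big_nat big1 // => m /andP [_ ml].
    rewrite !zc ?subrr ?expr0n // Kl ltnS //; exact: ltnW.
  rewrite hm addr0.
  have hs : \sum_i z i 0 ^+ 2 <= n%:R.
    rewrite -[n in n%:R]card_ord -sumr_const.
    apply: ler_sum => i _; rewrite mxE.
    by case: (i \in s); rewrite /= ?mulr1n ?mulr0n ?expr1n ?expr0n.
  have := ler_wpM2l (ltW eps0) hs.
  by rewrite /eps divfK // pnatr_eq0 -lt0n n0.
have zn0 : z != 0.
  apply/eqP => /matrixP /(_ (c 0) 0); rewrite z0 mxE => /eqP; rewrite oner_eq0.
  done.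
have := pdT z zn0; rewrite formT z0 zl; lra.
Qed.

Unset Implicit Arguments.

Theorem corollary5 (R : realType) (n : nat) (E : rel 'I_n) :
  simple_graph E ->
  (forall (A : 'M[R]_n) (E' : rel 'I_n),
      PG E A -> simple_graph E' -> subrel E' E ->
      posdef (threshold A E'))
  <-> ~ has_cycle E.
Proof.
move=> simE; split.
  move=> H [s [s3 us cs]].
  have [A [E' [PGA simE' sub nP]]] := @cycle_counter R n E s simE s3 us cs.
  exact: nP (H A E' PGA simE' sub).
move=> nc A E' PGA simE' sub; exact: (forest_pd simE nc PGA simE' sub).
Qed.
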